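(* Let $N\ge2$, $g\ge1$, and let $A(z)=\sum_{k=0}^{g-1}z^kA^{(k)}$ with $A^{(k)}\in M_N(\mathbb{C})$, $A^{(g-1)}\neq0$, be a polynomial loop of genus $g$, i.e. $A(z)$ is unitary for every $z\in\mathbb{T}=\{z\in\mathbb{C}:|z|=1\}$. Extend $A$ to all $z\in\mathbb{C}$ by the same polynomial formula. Then for all $z\in\mathbb{C}$, $$\bigl(\min(1,|z|^2)\bigr)^{g-1}\,\mathbb{1}_N\;\le\;A(z)^*A(z)\;\le\;\bigl(\max(1,|z|^2)\bigr)^{g-1}\,\mathbb{1}_N,$$ in the order of positive operators on $\mathbb{C}^N$, where $\mathbb{1}_N$ is the identity matrix. *)

(* Defs.v *)
From HB Require Import structures.
From mathcomp Require Import all_boot all_order all_algebra.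
From mathcomp Require Import complex.
From mathcomp Require Import reals.
Set Implicit Arguments. Unset Strict Implicit. Unset Printing Implicit Defensive.
Import Order.TTheory GRing.Theory Num.Theory.
Local Open Scope ring_scope.
Local Open Scope complex_scope.

Definition adjmx (C : numClosedFieldType) (m n : nat) (M : 'M[C]_(m, n)) : 'M[C]_(n, m) :=
  (map_mx Num.conj M)^T.

Definition unitary_mx (C : numClosedFieldType) (n : nat) (U : 'M[C]_n) : Prop :=
  adjmx U *m U = 1%:M /\ U *m adjmx U = 1%:M.

(* positive (semidefinite) operator: <v, M v> >= 0 for all v (in the order of
   the numClosedField C, this means real and nonnegative) *)
Definition psd_mx (C : numClosedFieldType) (n : nat) (M : 'M[C]_n) : Prop :=
  forall v : 'cV[C]_n, 0 <= (adjmx v *m M *m v) 0 0.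

Definition loewner_le (C : numClosedFieldType) (n : nat) (M1 M2 : 'M[C]_n) : Prop :=
  psd_mx (M2 - M1).

Definition loop_eval (C : ringType) (n g : nat) (A : nat -> 'M[C]_n) (z : C) : 'M[C]_n :=
  \sum_(k < g) z ^+ k *: A k.

(* Main.v *)
Require Import Defs.
From HB Require Import structures.
From mathcomp Require Import all_boot all_order all_algebra.
From mathcomp Require Import complex reals.
From mathcomp Require Import ring zify.
Import Order.TTheory GRing.Theory Num.Theory.
Set Implicit Arguments. Unset Strict Implicit. Unset Printing Implicit Defensive.
Local Open Scope ring_scope.

Definition ip (C : numClosedFieldType) n (x y : 'cV[C]_n) : C :=
  \sum_i (x i 0)^* * y i 0.

Lemma ipE (C : numClosedFieldType) n (x y : 'cV[C]_n) : (adjmx x *m y) 0 0 = ip x y.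
Proof. rewrite !mxE; apply: eq_bigr => i _; rewrite !mxE. done. Qed.

Lemma ipDr (C : numClosedFieldType) n (x y y' : 'cV[C]_n) : ip x (y + y') = ip x y + ip x y'.
Proof. rewrite /ip -big_split; apply: eq_bigr => i _; by rewrite !mxE mulrDr. Qed.

Lemma ipZr (C : numClosedFieldType) n (x y : 'cV[C]_n) a : ip x (a *: y) = a * ip x y.
Proof. rewrite /ip mulr_sumr; apply: eq_bigr => i _; by rewrite !mxE mulrCA. Qed.

Lemma ip_sumr (C : numClosedFieldType) n m (x : 'cV[C]_n) (F : 'I_m -> 'cV[C]_n) :
  ip x (\sum_(j < m) F j) = \sum_(j < m) ip x (F j).
Proof.
rewrite /ip; under eq_bigr do rewrite summxE mulr_sumr.
by rewrite exchange_big.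
Qed.

Lemma ipC (C : numClosedFieldType) n (x y : 'cV[C]_n) : ip y x = (ip x y)^*.
Proof. rewrite /ip rmorph_sum; apply: eq_bigr => i _; by rewrite rmorphM /= conjCK mulrC. Qed.

Lemma ipDl (C : numClosedFieldType) n (x x' y : 'cV[C]_n) : ip (x + x') y = ip x y + ip x' y.
Proof. by rewrite ipC ipDr rmorphD /= -!ipC. Qed.

Lemma ipZl (C : numClosedFieldType) n (x y : 'cV[C]_n) a : ip (a *: x) y = a^* * ip x y.
Proof. by rewrite ipC ipZr rmorphM /= -ipC. Qed.

Lemma ip_ge0 (C : numClosedFieldType) n (x : 'cV[C]_n) : 0 <= ip x x.
Proof. apply: sumr_ge0 => i _; by rewrite mulrC -normCK exprn_ge0. Qed.

Lemma adjmxM (C : numClosedFieldType) n m p (A : 'M[C]_(n,m)) (B : 'M[C]_(m,p)) :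
  adjmx (A *m B) = adjmx B *m adjmx A.
Proof. by rewrite /adjmx map_mxM trmx_mul. Qed.

Lemma circle_poly0 (C : numClosedFieldType) (p : {poly C}) :
  (forall z : C, `|z| = 1 -> p.[z] = 0) -> p = 0.
Proof.
move=> H; apply/eqP; apply: contraT => pn0.
pose w (k : nat) : C := 1 + k%:R * 'i.
have wc k : (w k)^* = 1 - k%:R * 'i.
  by rewrite /w rmorphD rmorph1 rmorphM /= conjC_nat conjCi mulrN.
have wn0 k : w k != 0.
  apply/negP => /eqP e.
  have : w k * (w k)^* = (k ^ 2).+1%:R.
    rewrite wc /w -addn1 natrD natrX.
    have -> : (1 + k%:R * 'i) * (1 - k%:R * 'i) = 1 - k%:R ^+ 2 * 'i ^+ 2 :> C by ring.
    by rewrite sqrCi mulrN1 opprK addrC.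
  by rewrite e mul0r => /esym/eqP; rewrite pnatr_eq0.
have wcn0 k : (w k)^* != 0 by rewrite conjC_eq0.
pose u k := w k / (w k)^*.
have u1 k : `|u k| = 1.
  by rewrite /u normf_div norm_conjC divff // normr_eq0.
have uinj : injective u.
  move=> k l /eqP; rewrite /u eqr_div // !wc /w => /eqP e.
  have h : ((k%:R - l%:R) * 'i) * 2 = 0 :> C.
    rewrite -[RHS](subrr ((1 + l%:R * 'i) * (1 - k%:R * 'i))).
    rewrite -[X in _ = X - _]e. ring.
  move/eqP: h; rewrite mulf_eq0 pnatr_eq0 orbF mulf_eq0 (negbTE (neq0Ci C)) orbF.
  by rewrite subr_eq0 eqr_nat => /eqP.
have := @max_poly_roots _ p (mkseq u (size p)) pn0.
rewrite size_mkseq ltnn mkseq_uniq // => ->//.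
apply/allP => x /mapP [k _ ->]; by rewrite /root H.
Qed.

Lemma core (C : numClosedFieldType) n g (W : nat -> 'cV[C]_n) (K : C) :
  (forall k, (g <= k)%N -> W k = 0) ->
  (forall z : C, `|z| = 1 ->
     ip (\sum_(k < g) z ^+ k *: W k) (\sum_(k < g) z ^+ k *: W k) = K) ->
  forall z : C, exists2 s, 0 <= s &
     ip (\sum_(k < g) z ^+ k *: W k) (\sum_(k < g) z ^+ k *: W k)
       = K + (`|z| ^+ 2 - 1) * s.
Proof.
move=> HW Hc z.
case: g HW Hc => [|g'] HW Hc.
  exists 0 => //; rewrite mulr0 addr0 -(Hc 1 (normr1 _)).
  by rewrite !big_ord0.
set g := g'.+1.
pose P (x : C) (m : nat) := \sum_(j < g) x ^+ j *: W (m + j)%N.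
have Pg x : P x g = 0.
  by apply: big1 => j _; rewrite HW ?leq_addr // scaler0.
have Prec x m : P x m = W m + x *: P x m.+1.
  rewrite /P big_ord_recl /= addn0.
  rewrite expr0 scale1r; congr (_ + _).
  rewrite [in RHS]big_ord_recr /= (HW (m.+1 + g')%N) ?scaler0 ?addr0; last first.
    by rewrite addSn ltnS leq_addl.
  rewrite scaler_sumr; apply: eq_bigr => i _ /=.
  by rewrite scalerA -exprS /bump /= add1n addnS.
pose F x m := ip (P x m) (P x m).
have Fstep x m : F x m = ip (W m) (W m) + x^* * x * F x m.+1
     + (x * ip (W m) (P x m.+1) + (x * ip (W m) (P x m.+1))^*).
  rewrite /F {1 2}Prec ipDl !ipDr !ipZl !ipZr (ipC (P x m.+1) (W m)).
  rewrite rmorphM /= conjCK; ring.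
have tele x k : (k <= g)%N -> F x 0 = \sum_(j < k) (F x j - F x j.+1) + F x k.
  elim: k => [|k IH] hk; first by rewrite big_ord0 add0r.
  by rewrite big_ord_recr /= IH ?(ltnW hk) // -addrA addrNK.
pose gam (m : nat) := \sum_(j < g) ip (W j) (W (j.+1 + m)%N).
pose S := \sum_(j < g) ip (W j) (W j).
pose T x := \sum_(j < g) F x j.+1.
pose c x := \sum_(j < g) ip (W j) (P x j.+1).
have cE x : c x = \sum_(m < g) gam m * x ^+ m.
  rewrite /c /gam; under eq_bigr do rewrite ip_sumr.
  rewrite exchange_big /=; apply: eq_bigr => m _; rewrite mulr_suml.
  by apply: eq_bigr => j _; rewrite ipZr mulrC.
have F0 x : F x 0 = S + (x^* * x - 1) * T x + (x * c x + (x * c x)^*).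
  have Fg : F x g = 0.
    by rewrite /F Pg /ip big1 // => i _; rewrite mxE mulr0.
  rewrite (tele x g) // Fg addr0.
  rewrite (eq_bigr (fun j : 'I_g => ip (W j) (W j) + (x^* * x - 1) * F x j.+1
     + (x * ip (W j) (P x j.+1) + (x * ip (W j) (P x j.+1))^*))); last first.
    by move=> j _; rewrite Fstep; ring.
  rewrite !big_split /= -!mulr_sumr -rmorph_sum -mulr_sumr.
  done.
have P0 x : P x 0 = \sum_(k < g) x ^+ k *: W k.
  by apply: eq_bigr => j _; rewrite add0n.
have circ x : `|x| = 1 -> x * c x + (x * c x)^* = K - S.
  move=> hx.
  have xx : x^* * x = 1 by rewrite mulrC -normCK hx expr1n.
  have := F0 x; rewrite /F P0 Hc // xx subrr mul0r addr0 => ->.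
  by rewrite addrAC subrr add0r.
pose p : {poly C} := 'X^(g.+1) * \poly_(m < g) gam m
   + \poly_(m < g) (gam (g' - m)%N)^* - (K - S) *: ('X^g).
have hp x : `|x| = 1 -> p.[x] = 0.
  move=> hx.
  have xx : x * x^* = 1 by rewrite -normCK hx expr1n.
  have xk k : x ^+ k * x^* ^+ k = 1 by rewrite -exprMn xx expr1n.
  have e2 : x ^+ g * (x * c x)^* = \sum_(m < g) (gam (g' - m)%N)^* * x ^+ m.
    rewrite cE rmorphM rmorph_sum /= !mulr_sumr.
    rewrite (reindex_inj rev_ord_inj) /=; apply: eq_bigr => i _.
    rewrite rmorphM rmorphXn /= subSS.
    have hi : (i <= g')%N by rewrite -ltnS.

    have -> : x ^+ g * (x^* * ((gam (g' - i)%N)^* * x^* ^+ (g' - i)))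
       = (x * x^*) * (x ^+ (g' - i) * x^* ^+ (g' - i)) * ((gam (g' - i)%N)^* * x ^+ i).
      have eg : x ^+ g = x * (x ^+ i * x ^+ (g' - i)) by rewrite -exprD subnKC // /g exprS.
      rewrite eg; ring.
    by rewrite xx xk !mul1r.
  rewrite /p !hornerE !horner_poly -e2 -cE -(circ x hx).
  rewrite /g exprS; ring.
have p0 : p = 0 by apply: circle_poly0.
have KS : K = S.
  have := congr1 (fun q : {poly C} => q`_g) p0.
  rewrite /p coefB coefD coefXnM ltnSn coef_poly ltnn coefZ coefXn eqxx coef0.
  by rewrite add0r mulr1 sub0r => /eqP; rewrite oppr_eq0 subr_eq0 => /eqP.
have gam0 m : (m < g)%N -> gam m = 0.
  move=> hm; have := congr1 (fun q : {poly C} => q`_(g.+1 + m)%N) p0.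
  rewrite /p coefB coefD coefXnM coef_poly coefZ coefXn coef0.
  rewrite ltnNge leq_addr /= addKn hm coef_poly.
  have -> : (g.+1 + m < g)%N = false by apply/negbTE; rewrite -leqNgt; lia.
  have -> : ((g.+1 + m)%N == g) = false by apply/negbTE; apply/eqP; lia.
  by rewrite addr0 mulr0 subr0.
have c0 x : c x = 0.
  by rewrite cE big1 // => m _; rewrite gam0 // mul0r.
exists (T z).
  by apply: sumr_ge0 => j _; apply: ip_ge0.
rewrite -P0 -/(F z 0) F0 c0 mulr0 rmorph0 addr0 addr0 KS.
by rewrite normCK (mulrC z).
Qed.

Lemma rev_eval (C : numClosedFieldType) n g (W : nat -> 'cV[C]_n) (z : C) : z != 0 ->
  \sum_(k < g) z ^+ k *: W k =
  z ^+ g.-1 *: \sum_(k < g) z^-1 ^+ k *: (if (k < g)%N then W (g.-1 - k)%N else 0).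
Proof.
move=> z0; case: g => [|g']; first by rewrite !big_ord0 scaler0.
rewrite scaler_sumr /= (reindex_inj rev_ord_inj) /=; apply: eq_bigr => i _.
rewrite subSS.
have hi : (i <= g')%N by rewrite -ltnS.
rewrite ifT; last by lia.
rewrite scalerA; congr (_ *: _).
have e : z ^+ g' = z ^+ (g' - i) * z ^+ i by rewrite -exprD subnK.
rewrite exprVn e mulrK //.
by rewrite unitrX // unitfE.
Qed.

Lemma ipZZ (C : numClosedFieldType) n (x : 'cV[C]_n) a :
  ip (a *: x) (a *: x) = `|a| ^+ 2 * ip x x.
Proof. by rewrite ipZl ipZr mulrA normCK (mulrC a). Qed.

Lemma bounds (C : numClosedFieldType) n g (W : nat -> 'cV[C]_n) (K : C) :
  (forall k, (g <= k)%N -> W k = 0) ->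
  (forall z : C, `|z| = 1 ->
     ip (\sum_(k < g) z ^+ k *: W k) (\sum_(k < g) z ^+ k *: W k) = K) ->
  forall z : C,
  let Q := ip (\sum_(k < g) z ^+ k *: W k) (\sum_(k < g) z ^+ k *: W k) in
  let t := `|z| ^+ 2 in
  (t <= 1 -> Q <= K /\ t ^+ g.-1 * K <= Q) /\
  (1 <= t -> K <= Q /\ Q <= t ^+ g.-1 * K).
Proof.
move=> HW Hc z Q t.
pose Wr k := if (k < g)%N then W (g.-1 - k)%N else 0.
have HWr k : (g <= k)%N -> Wr k = 0 by rewrite /Wr leqNgt => /negbTE ->.
have Hcr x : `|x| = 1 ->
   ip (\sum_(k < g) x ^+ k *: Wr k) (\sum_(k < g) x ^+ k *: Wr k) = K.
  move=> hx.
  have x0 : x != 0 by rewrite -normr_eq0 hx oner_eq0.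
  have y1 : `|x^-1| = 1 by rewrite normfV hx invr1.
  have := Hc _ y1; rewrite (rev_eval g W (invr_neq0 x0)) invrK ipZZ.
  by rewrite normrX y1 !expr1n mul1r.
have [s s0 Hs] := core HW Hc z.
have tge0 : 0 <= t by rewrite exprn_ge0.
have Hrev : z != 0 -> exists2 s', 0 <= s' & Q = t ^+ g.-1 * (K + (t^-1 - 1) * s').
  move=> z0; have [s' s'0 Hs'] := core HWr Hcr z^-1.
  exists s' => //; rewrite /Q (rev_eval g W z0) ipZZ -/Wr Hs'.
  by rewrite normfV exprVn normrX -exprM mulnC exprM.
have tpos : z != 0 -> 0 < t by move=> z0; rewrite exprn_gt0 // normr_gt0.
split => ht; split.
- rewrite /Q Hs gerDl mulr_le0_ge0 // subr_le0 //.
- have [z0|z0] := eqVneq z 0.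
    rewrite /Q /t z0 normr0.
    clear Hrev Hs Hcr HWr s0 ht tpos tge0 Q t.
    case: g HW Hc Wr => [|[|g']] HW Hc Wr.
    + by rewrite !big_ord0 -(Hc 1 (normr1 _)) !big_ord0 expr0 mul1r.
    + by rewrite big_ord1 -(Hc 1 (normr1 _)) big_ord1 !expr0 mul1r.
    + by rewrite expr0n /= expr0n /= mul0r ip_ge0.
  have [s' s'0 ->] := Hrev z0.
  rewrite ler_wpM2l ?exprn_ge0 // lerDl mulr_ge0 // subr_ge0.
  by rewrite invf_ge1 ?tpos.
- by rewrite /Q Hs lerDl mulr_ge0 // subr_ge0.
- have z0 : z != 0.
    apply/eqP => z0; move: ht; rewrite /t z0 normr0 expr0n /=.
    by rewrite ler10.
  have [s' s'0 ->] := Hrev z0.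
  rewrite ler_wpM2l ?exprn_ge0 // gerDl mulr_le0_ge0 // subr_le0.
  by rewrite invf_le1 ?tpos.
Qed.

Unset Implicit Arguments.
Set Strict Implicit.
Local Open Scope complex_scope.

Theorem corollary5p3 (R : realType) (N g : nat) (A : nat -> 'M[R[i]]_N) :
  (2 <= N)%N -> (1 <= g)%N -> A g.-1 != 0 ->
  (forall z : R[i], `|z| = 1 -> unitary_mx (loop_eval g A z)) ->
  forall z : R[i],
    loewner_le ((Num.min 1 (`|z| ^+ 2)) ^+ g.-1 *: 1%:M)
               (adjmx (loop_eval g A z) *m loop_eval g A z) /\
    loewner_le (adjmx (loop_eval g A z) *m loop_eval g A z)
               ((Num.max 1 (`|z| ^+ 2)) ^+ g.-1 *: 1%:M).
Proof.
move=> _ _ _ Hu z.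
have key : forall v : 'cV[R[i]]_N,
  let Q := (adjmx v *m (adjmx (loop_eval g A z) *m loop_eval g A z) *m v) 0 0 in
  let t := `|z| ^+ 2 in
  (t <= 1 -> Q <= ip v v /\ t ^+ g.-1 * ip v v <= Q) /\
  (1 <= t -> ip v v <= Q /\ Q <= t ^+ g.-1 * ip v v).
  move=> v.
  pose W k := if (k < g)%N then A k *m v else 0.
  have HW k : (g <= k)%N -> W k = 0 by rewrite /W leqNgt => /negbTE ->.
  have ev x : loop_eval g A x *m v = \sum_(k < g) x ^+ k *: W k.
    rewrite /loop_eval mulmx_suml; apply: eq_bigr => k _.
    by rewrite /W ltn_ord scalemxAl.
  have qE x : (adjmx v *m (adjmx (loop_eval g A x) *m loop_eval g A x) *m v) 0 0
      = ip (\sum_(k < g) x ^+ k *: W k) (\sum_(k < g) x ^+ k *: W k).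
    by rewrite mulmxA -mulmxA -adjmxM ev ipE.
  have Hc x : `|x| = 1 ->
      ip (\sum_(k < g) x ^+ k *: W k) (\sum_(k < g) x ^+ k *: W k) = ip v v.
    move=> hx; rewrite -qE; have [-> _] := Hu x hx.
    by rewrite mulmx1 ipE.
  move=> Q t; rewrite /Q qE; exact: (bounds HW Hc z).
have subE : forall (X Y : 'M[R[i]]_1), (X - Y) 0 0 = X 0 0 - Y 0 0.
  by move=> X Y; rewrite !mxE.
have quadE : forall (M : 'M[R[i]]_N) (c : R[i]) (v : 'cV[R[i]]_N),
    (adjmx v *m (M - c *: 1%:M) *m v) 0 0 = (adjmx v *m M *m v) 0 0 - c * ip v v.
  move=> M c v; rewrite mulmxBr mulmxBl subE; congr (_ - _).
  by rewrite scalemx1 mul_mx_scalar -scalemxAl mxE ipE.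
have quadE' : forall (M : 'M[R[i]]_N) (c : R[i]) (v : 'cV[R[i]]_N),
    (adjmx v *m (c *: 1%:M - M) *m v) 0 0 = c * ip v v - (adjmx v *m M *m v) 0 0.
  move=> M c v; rewrite mulmxBr mulmxBl subE; congr (_ - _).
  by rewrite scalemx1 mul_mx_scalar -scalemxAl mxE ipE.
have treal : `|z| ^+ 2 \is Num.real by rewrite ger0_real // exprn_ge0.
split; move=> v; rewrite ?quadE ?quadE' subr_ge0; have [H1 H3] := key v;
  case: (real_leP (real1 _) treal) => ht.
- by rewrite expr1n mul1r; case: (H3 ht).
- by case: (H1 (ltW ht)).
- by case: (H3 ht).
- by rewrite expr1n mul1r; case: (H1 (ltW ht)).
Qed.
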